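(* Let $p$ be a prime, $\mathbb{F}=\mathbb{F}_p$, and let $f\in\mathbb{F}[x_1,\dots,x_n]$ be a homogeneous polynomial of degree at most $p-1$. Let $Z=\{x\in\mathbb{F}^n: f(x)=0\}$ and let $a\in\mathbb{F}\setminus\{0\}$ be such that $S=\{x\in\mathbb{F}^n: f(x)=a\}$ is nonempty. Then the $p$-dimensional rectangle $Z\times S\times\cdots\times S$ contains no line with direction $d\in Z$.
   Context: The line through $x\in\mathbb{F}^n$ in direction $d\in\mathbb{F}^n$ is $\ell_{x,d}=(x+\lambda d)_{\lambda\in\mathbb{F}}$; a rectangle $T_1\times\cdots\times T_p$ contains $\ell_{x,d}$ if $x+\lambda d\in T_{\lambda+1}$ for every $\lambda\in\{0,1,\dots,p-1\}$. *)

(* Defs.v *)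
From HB Require Import structures.
From mathcomp Require Import all_boot all_order all_algebra.
From mathcomp Require Import mpoly.
Set Implicit Arguments. Unset Strict Implicit. Unset Printing Implicit Defensive.
Import GRing.Theory.
Local Open Scope ring_scope.

Definition line_pt (F : ringType) (n : nat) (x d : 'I_n -> F) (lam : F) : 'I_n -> F :=
  fun i => x i + lam * d i.

(* The rectangle T_1 x ... x T_p (T indexed by 1..p) contains the line l_{x,d}
   iff x + lam d \in T_(lam+1) for every lam in {0,1,...,p-1}, where the natural
   number lam is viewed in F via lam%:R. *)
Definition rect_contains_line (F : ringType) (n p : nat)
    (T : nat -> ('I_n -> F) -> Prop) (x d : 'I_n -> F) : Prop :=
  forall lam : nat, (lam < p)%N -> T lam.+1 (line_pt x d lam%:R).

Definition zero_set (F : comRingType) (n : nat) (f : {mpoly F[n]}) : ('I_n -> F) -> Prop :=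
  fun x => f.@[x] = 0.
Definition level_set (F : comRingType) (n : nat) (f : {mpoly F[n]}) (a : F) : ('I_n -> F) -> Prop :=
  fun x => f.@[x] = a.

Definition ZSS_rect (F : comRingType) (n : nat) (f : {mpoly F[n]}) (a : F) :
    nat -> ('I_n -> F) -> Prop :=
  fun k => if k == 1%N then zero_set f else level_set f a.

(* Main.v *)
Require Import Defs.
From HB Require Import structures.
From mathcomp Require Import all_boot all_order all_algebra.
From mathcomp Require Import mpoly.
From mathcomp Require Import zify.
Import GRing.Theory.
Local Open Scope ring_scope.

Lemma coefM_top (F : comNzRingType) (p q : {poly F}) (a b : nat) :
  (size p <= a.+1)%N -> (size q <= b.+1)%N -> (p * q)`_(a + b) = p`_a * q`_b.
Proof.
move=> hp hq; rewrite coefM.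
have ha : (a < (a + b).+1)%N by rewrite ltnS leq_addr.
rewrite (bigD1 (Ordinal ha)) //= big1 ?addr0; first by rewrite addKn.
move=> [j hj] /= /eqP hne.
have hne' : j <> a by move=> e; apply: hne; exact: val_inj.
case: (ltngtP j a) => hja; last by [].
- rewrite [q`_ _]nth_default ?mulr0 //; apply: leq_trans hq _.
  have : (a + b - j = b + (a - j))%N by rewrite addnC addnBA // ltnW.
  move=> ->; rewrite -addn1 leq_add2l subn_gt0 //.
- by rewrite [p`_j]nth_default ?mul0r //; apply: leq_trans hp _.
Qed.

Lemma top_mul (F : comNzRingType) (p q : {poly F}) (a b : nat) :
  (size p <= a.+1)%N -> (size q <= b.+1)%N ->
  (size (p * q)%R <= (a + b).+1)%N /\ (p * q)`_(a + b) = p`_a * q`_b.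
Proof.
move=> hp hq; split; last exact: (coefM_top _ _ _ _ _ hp hq).
apply: leq_trans (size_polyMleq _ _) _.
move: hp hq; case: (size p) => [|sp] /=; lia.
Qed.

Lemma top_exp (F : comNzRingType) (p : {poly F}) (e : nat) :
  (size p <= 2)%N -> (size (p ^+ e)%R <= e.+1)%N /\ (p ^+ e)`_e = p`_1 ^+ e.
Proof.
move=> hp; elim: e => [|e [IH1 IH2]].
  by rewrite !expr0 size_poly1 coefC.
have [h1 h2] := top_mul _ _ _ _ _ IH1 hp.
rewrite addn1 in h1 h2; by rewrite !exprSr h2 IH2; split.
Qed.

Lemma top_prod (F : comNzRingType) (I : Type) (r : seq I) (P : I -> {poly F}) (e : I -> nat) :
  (forall i, size (P i) <= (e i).+1)%N ->
  (size (\prod_(i <- r) P i)%R <= (\sum_(i <- r) e i).+1)%N /\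
  (\prod_(i <- r) P i)`_(\sum_(i <- r) e i) = \prod_(i <- r) (P i)`_(e i).
Proof.
move=> hP; elim: r => [|i r [IH1 IH2]].
  by rewrite !big_nil size_poly1 coefC.
have [h1 h2] := top_mul _ _ _ _ _ (hP i) IH1.
by rewrite !big_cons h2 IH2.
Qed.

Theorem lemma3p4 (p n : nat) (hp : prime p) (f : {mpoly 'F_p[n]})
  (hhom : exists2 k : nat, (k <= p.-1)%N & f \is k.-homog)
  (a : 'F_p) (ha : a != 0)
  (hS : exists x : 'I_n -> 'F_p, level_set f a x) :
  forall x d : 'I_n -> 'F_p, zero_set f d ->
    ~ rect_contains_line p (ZSS_rect f a) x d.
Proof.
move=> x d hd hrect.
have [k hk hom] := hhom.
pose L (i : 'I_n) : {poly 'F_p} := (x i)%:P + (d i)%:P * 'X.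
have hL : forall i, (size (L i) <= 2)%N.
  move=> i; apply: leq_trans (size_polyD _ _) _; rewrite geq_max.
  apply/andP; split; first by rewrite size_polyC; case: (x i != 0).
  apply: leq_trans (size_polyMleq _ _) _.
  by rewrite size_polyX size_polyC; case: (d i != 0).
have hL1 : forall i, (L i)`_1 = d i.
  by move=> i; rewrite coefD coefC coefCM coefX /= add0r mulr1.
pose G : {poly 'F_p} := \sum_(m <- msupp f) (f@_m)%:P * \prod_(i < n) L i ^+ m i.
have hG : forall lam, G.[lam] = f.@[line_pt x d lam].
  move=> lam; rewrite mevalE horner_sum; apply: eq_bigr => m _.
  rewrite hornerCM horner_prod; congr (_ * _); apply: eq_bigr => i _.
  by rewrite horner_exp hornerD hornerCM hornerC hornerX /line_pt mulrC.
have hterm : forall m, m \in msupp f ->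
    (size (\prod_(i < n) L i ^+ m i)%R <= k.+1)%N /\
    (\prod_(i < n) L i ^+ m i)`_k = \prod_(i < n) d i ^+ m i.
  move=> m hm; have hk' : mdeg m = k by apply: (dhomog_mf hom).
  have [h1 h2] := top_prod _ _ (index_enum 'I_n) (fun i => L i ^+ m i) (fun i => m i)
     (fun i => proj1 (top_exp _ _ (m i) (hL i))).
  rewrite -mdegE hk' in h1 h2; split => //; rewrite h2; apply: eq_bigr => i _.
  by have [_ ->] := top_exp _ _ (m i) (hL i); rewrite hL1.
have hsG : (size G <= k.+1)%N.
  rewrite /G big_seq; apply: (big_ind (fun q : {poly 'F_p} => size q <= k.+1)%N).
  - by rewrite size_poly0.
  - by move=> q1 q2 h1 h2; apply: leq_trans (size_polyD _ _) _; rewrite geq_max h1.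
  - move=> m hm; apply: leq_trans (size_polyMleq _ _) _.
    have [h1 _] := hterm m hm; rewrite size_polyC.
    by case: (f@_m != 0) => /=; [exact: h1 | apply: leq_trans (leq_pred _) h1].
have hGk : G`_k = 0.
  rewrite /G coef_sum; transitivity f.@[d]; last exact: hd.
  rewrite mevalE; apply: eq_big_seq => m hm.
  by rewrite coefCM; have [_ ->] := hterm m hm.
have hsG' : (size G <= k)%N.
  move: hsG; rewrite leq_eqVlt ltnS => /orP [/eqP hs|//].
  have : lead_coef G = 0 by rewrite lead_coefE hs.
  by move/eqP; rewrite lead_coef_eq0 => /eqP G0; move: hs; rewrite G0 size_poly0.
have hp1 := prime_gt1 hp.
pose H := G - a%:P.
have hsH : (size H <= p.-1)%N.
  apply: leq_trans (size_polyD _ _) _; rewrite geq_max size_polyN size_polyC.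
  rewrite (leq_trans hsG' hk) /=; apply: leq_trans (leq_b1 _) _; lia.
have h0 := hrect 0%N (prime_gt0 hp).
rewrite /ZSS_rect /= /zero_set -hG in h0.
have hH0 : H != 0.
  apply/eqP => H0; have : H.[0%:R] = 0 by rewrite H0 horner0.
  rewrite hornerD hornerN hornerC h0 sub0r => /eqP; rewrite oppr_eq0.
  by apply/negP.
pose rs := [seq (j%:R : 'F_p) | j <- iota 1 p.-1].
have := max_poly_roots hH0 (rs := rs).
rewrite size_map size_iota.
have -> : all (root H) rs.
  apply/allP => _ /mapP [j hj ->]; rewrite mem_iota in hj.
  have hjp : (j < p)%N by move: hj; lia.
  have := hrect j hjp; rewrite /ZSS_rect /=.
  have -> : (j.+1 == 1)%N = false by move: hj; case: j {hjp} => //.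
  rewrite /level_set -hG => hGj.
  by rewrite /root hornerD hornerN hornerC hGj subrr.
have -> : uniq rs.
  rewrite map_inj_in_uniq ?iota_uniq // => i j; rewrite !mem_iota => hi hj /(congr1 val).
  move=> h; move: h => /=; rewrite !(val_Fp_nat hp) !modn_small; [lia | move: hj; lia | move: hi; lia].
move=> /(_ isT isT); rewrite ltnNge hsH //.
Qed.
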